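(* Let $\mathcal T$ be an atomic orbital category and $\mathcal C$ an almost essentially unital $\mathcal T$-weak indexing system. Then $\mathcal C=\mathrm{Cl}_\infty(\mathcal C\cap\underline{\mathbb F}^{sparse}_{\mathcal T})$, the smallest $\mathcal T$-weak indexing system containing all sparse elements of $\mathcal C$.
   Context: For a small category $\mathcal T$, $\mathbb F_{\mathcal T}$ is the full subcategory of $\mathrm{Fun}(\mathcal T^{op},\mathrm{Set})$ on finite coproducts of representables; $\mathcal T$ is orbital if $\mathbb F_{\mathcal T}$ has pullbacks, and atomic if every morphism of $\mathcal T$ admitting a section is an isomorphism. $\mathbb F_V:=\mathbb F_{\mathcal T,/V}$, $*_V$ terminal; for $U\to V$, $\mathrm{Res}^V_U$ is pullback and $\mathrm{Ind}^V_U$ postcomposition. A full $\mathcal T$-subcategory assigns isomorphism-closed classes $\mathcal C_V\subseteq\mathrm{Ob}\,\mathbb F_V$ stable under restriction. For $S\in\mathbb F_V$ with orbits $U$ and $T_U\in\mathbb F_U$, $\coprod_U^ST_U:=\coprod_U\mathrm{Ind}_U^VT_U$. A $\mathcal T$-weak indexing system is a full $\mathcal T$-subcategory with $\mathcal C_V\neq\emptyset\Rightarrow *_V\in\mathcal C_V$ and closed under $\coprod^S_UT_U$ for $S\in\mathcal C_V$, $T_U\in\mathcal C_U$; since intersections of weak indexing systems are weak indexing systems, every collection of finite sets is contained in a smallest one. It is almost essentially unital if whenever $S\sqcup S'\in\mathcal C_V$ is not isomorphic to $*_V$, we have $S,S'\in\mathcal C_V$. A $V$-set is sparse if it has the form $\varepsilon\cdot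 *_V\sqcup W_1\sqcup\cdots\sqcup W_n$ with $\varepsilon\in\{0,1\}$ and orbits $W_i\in\mathcal T_{/V}$ such that there is no map $W_i\to W_j$ in $\mathcal T_{/V}$ for $i\neq j$; $\mathcal C\cap\underline{\mathbb F}^{sparse}_{\mathcal T}$ is the collection $V\mapsto\{S\in\mathcal C_V\mid S\text{ sparse}\}$. *)

(* Defs.v *)
From mathcomp Require Import all_boot.
Unset Printing Implicit Defensive.

Record Cat := {
  Ob : Type;
  Hom : Ob -> Ob -> Type;
  idm : forall a, Hom a a;
  comp : forall a b c, Hom b c -> Hom a b -> Hom a c;
  comp_idl : forall a b (f : Hom a b), comp a b b (idm b) f = f;
  comp_idr : forall a b (f : Hom a b), comp a a b f (idm a) = f;
  comp_assoc : forall a b c d (h : Hom c d) (g : Hom b c) (f : Hom a b),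
      comp a c d h (comp a b c g f) = comp a b d (comp b c d h g) f
}.
Arguments Hom {_} _ _.
Arguments idm {_} a.
Arguments comp {_ a b c} _ _.

Section FT.
Variable T : Cat.

Definition is_iso (U V : Ob T) (f : Hom U V) : Prop :=
  exists g : Hom V U, comp g f = idm U /\ comp f g = idm V.

(* ---------- F_T : finite coproducts of representables ----------
   By Yoneda, a finite coproduct of representables  coprod_{i in I} y(U_i)
   is determined by the finite family (U_i)_{i in I}, and a morphism
   coprod_i y(U_i) -> coprod_j y(V_j) is the same as a choice, for each i,
   of a summand j and a morphism U_i -> V_j in T. *)
Record FObj := { fidx : finType; fcomp : fidx -> Ob T }.


Definition FHom (X Y : FObj) : Type :=
  forall i : fidx X, {j : fidx Y & Hom (fcomp X i) (fcomp Y j)}.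

Definition feq X Y (f g : FHom X Y) : Prop := forall i, f i = g i.
Arguments feq {X Y} f g.

Definition fid (X : FObj) : FHom X X := fun i => existT _ i (idm (fcomp X i)).

Definition fcompose X Y Z (g : FHom Y Z) (f : FHom X Y) : FHom X Z :=
  fun i => existT _ (projT1 (g (projT1 (f i))))
                    (comp (projT2 (g (projT1 (f i)))) (projT2 (f i))).
Arguments fcompose {X Y Z} g f _.

Definition is_pullback (P X Y Z : FObj) (p1 : FHom P X) (p2 : FHom P Y)
    (f : FHom X Z) (g : FHom Y Z) : Prop :=
  feq (fcompose f p1) (fcompose g p2) /\
  forall (Q : FObj) (q1 : FHom Q X) (q2 : FHom Q Y),
    feq (fcompose f q1) (fcompose g q2) ->
    exists u : FHom Q P,
      feq (fcompose p1 u) q1 /\ feq (fcompose p2 u) q2 /\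
      forall u' : FHom Q P, feq (fcompose p1 u') q1 -> feq (fcompose p2 u') q2 ->
        feq u u'.
Arguments is_pullback {P X Y Z} p1 p2 f g.

(* the representable y(V) as an object of F_T *)
Definition pt (V : Ob T) : FObj := {| fidx := unit; fcomp := fun _ => V |}.
Definition ptHom (U V : Ob T) (a : Hom U V) : FHom (pt U) (pt V) :=
  fun _ => existT (fun j : fidx (pt V) => Hom U (fcomp (pt V) j)) tt a.
Arguments ptHom {U V} a _.

Record SObj (V : Ob T) := { sobj : FObj; smap : forall i : fidx sobj, Hom (fcomp sobj i) V }.
Arguments sobj {V} s.
Arguments smap {V} s _.

Definition toPt V (S : SObj V) : FHom (sobj S) (pt V) :=
  fun i => existT (fun j : fidx (pt V) => Hom (fcomp (sobj S) i) (fcomp (pt V) j)) tt (smap S i).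
Arguments toPt {V} S _.

Definition is_sHom V (S S' : SObj V) (f : FHom (sobj S) (sobj S')) : Prop :=
  forall i, comp (smap S' (projT1 (f i))) (projT2 (f i)) = smap S i.
Arguments is_sHom {V S S'} f.

Definition s_iso V (S S' : SObj V) : Prop :=
  exists (f : FHom (sobj S) (sobj S')) (g : FHom (sobj S') (sobj S)),
    is_sHom f /\ is_sHom g /\ feq (fcompose g f) (@fid (sobj S)) /\ feq (fcompose f g) (@fid (sobj S')).
Arguments s_iso {V} S S'.

Definition starV (V : Ob T) : SObj V :=
  {| sobj := pt V; smap := fun _ => idm V |}.

Definition scoprod V (S S' : SObj V) : SObj V :=
  {| sobj := {| fidx := (fidx (sobj S) + fidx (sobj S'))%type;
                fcomp := fun k => match k with inl i => fcomp (sobj S) i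
                                             | inr i => fcomp (sobj S') i end |};
     smap := fun k => match k with inl i => smap S i | inr i => smap S' i end |}.
Arguments scoprod {V} S S'.

Definition Ind U V (a : Hom U V) (S : SObj U) : SObj V :=
  {| sobj := sobj S; smap := fun i => comp a (smap S i) |}.
Arguments Ind {U V} a S.

(* \coprod^S_U T_U := \coprod_{orbits U of S} Ind^V_U T_U ;
   the orbits of S are its summands (fcomp (sobj S) i, smap S i), i in fidx *)
Definition orbit_coprod V (S : SObj V)
    (Tf : forall i : fidx (sobj S), SObj (fcomp (sobj S) i)) : SObj V :=
  {| sobj := {| fidx := {i : fidx (sobj S) & fidx (sobj (Tf i))};
                fcomp := fun p => fcomp (sobj (Tf (tag p))) (tagged p) |};
     smap := fun p => comp (smap S (tag p)) (smap (Tf (tag p)) (tagged p)) |}.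
Arguments orbit_coprod {V} S Tf.

Definition collection := forall V : Ob T, SObj V -> Prop.

(* full T-subcategory: isomorphism-closed and stable under restriction
   (Res^V_U S = pullback of S -> V along U -> V, computed in F_T) *)
Definition full_Tsubcat (C : collection) : Prop :=
  (forall V (S S' : SObj V), C V S -> s_iso S S' -> C V S') /\
  (forall U V (a : Hom U V) (S : SObj V) (P : FObj)
          (p1 : FHom P (sobj S)) (p2 : FHom P (pt U)),
     is_pullback p1 p2 (toPt S) (ptHom a) ->
     C V S -> C U {| sobj := P; smap := fun i => projT2 (p2 i) |}).

Definition weak_indexing_system (C : collection) : Prop :=
  full_Tsubcat C /\
  (forall V, (exists S, C V S) -> C V (starV V)) /\
  (forall V (S : SObj V) (Tf : forall i, SObj (fcomp (sobj S) i)),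
     C V S -> (forall i, C (fcomp (sobj S) i) (Tf i)) -> C V (orbit_coprod S Tf)).

Definition almost_essentially_unital (C : collection) : Prop :=
  forall V (S S' : SObj V), C V (scoprod S S') -> ~ s_iso (scoprod S S') (starV V) ->
    C V S /\ C V S'.

(* the V-set  eps * *_V |_| W_1 |_| ... |_| W_n *)
Definition sparse_model V (eps : bool) (n : nat) (W : 'I_n -> {X : Ob T & Hom X V})
  : SObj V :=
  {| sobj := {| fidx := ('I_eps + 'I_n)%type;
                fcomp := fun k => match k with inl _ => V | inr i => projT1 (W i) end |};
     smap := fun k => match k return Hom (match k with inl _ => V | inr i => projT1 (W i) end) V
                      with inl _ => idm V | inr i => projT2 (W i) end |}.
Arguments sparse_model {V} eps {n} W.

Definition sparse V (S : SObj V) : Prop :=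
  exists (eps : bool) (n : nat) (W : 'I_n -> {X : Ob T & Hom X V}),
    (forall i j : 'I_n, i != j ->
       ~ exists h : Hom (projT1 (W i)) (projT1 (W j)), comp (projT2 (W j)) h = projT2 (W i)) /\
    s_iso S (sparse_model eps W).
Arguments sparse {V} S.

Definition sparse_part (C : collection) : collection :=
  fun V S => C V S /\ sparse S.

Definition Cl_infty (D : collection) : collection :=
  fun V S => forall E : collection, weak_indexing_system E ->
    (forall V' (S' : SObj V'), D V' S' -> E V' S') -> E V S.

End FT.
Arguments is_iso {T U V} f.
Arguments FHom {T} X Y.
Arguments is_pullback {T P X Y Z} p1 p2 f g.
Arguments SObj {T} V.
Arguments sobj {T V} s.
Arguments smap {T V} s _.
Arguments Cl_infty {T} D V S.
Arguments sparse_part {T} C V S.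
Arguments weak_indexing_system {T} C.
Arguments almost_essentially_unital {T} C.
Arguments sparse {T V} S.

Definition atomic (T : Cat) : Prop :=
  forall (U V : Ob T) (f : Hom U V), (exists s : Hom V U, comp f s = idm V) -> is_iso f.

Definition orbital (T : Cat) : Prop :=
  forall (X Y Z : FObj T) (f : FHom X Z) (g : FHom Y Z),
    exists (P : FObj T) (p1 : FHom P X) (p2 : FHom P Y), is_pullback p1 p2 f g.

(* Main.v *)
Require Import Defs.
From mathcomp Require Import all_boot.
From Stdlib Require Import Eqdep_dec Classical FunctionalExtensionality.

Section Main.
Variable T : Cat.
Local Notation cmp := (@Defs.comp T _ _ _).

Definition bdec (b : bool) : {b} + {~~ b} :=
  if b as b' return {b'} + {~~ b'} then left isT else right isT.

Definition castF (I : Type) (F : I -> Ob T) (x y : I) (e : x = y) : Hom (F x) (F y) :=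
  match e in _ = y' return Hom (F x) (F y') with erefl => idm (F x) end.
Arguments castF {I} F {x y} e.

Lemma castF_irr (I : eqType) (F : I -> Ob T) (x : I) (e : x = x) : castF F e = idm _.
Proof. by rewrite (eq_irrelevance e erefl). Qed.

Lemma pair2 (I : eqType) (P : I -> Type) (p : I) (x y : P p) :
  existT P p x = existT P p y -> x = y.
Proof. apply: inj_pair2_eq_dec; exact: eq_comparable. Qed.
Arguments pair2 {I P p x y}.

Lemma s_iso_refl V (S : SObj V) : s_iso T _ S S.
Proof.
exists (fid T _), (fid T _); split; [|split; [|split]] => i /=;
  rewrite /fid /fcompose /= ?comp_idr ?comp_idl //.
Qed.

Lemma s_iso_sym {V} {S S' : SObj V} : s_iso T _ S S' -> s_iso T _ S' S.
Proof. by case=> f [g [h1 [h2 [h3 h4]]]]; exists g, f. Qed.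

Definition restrict V (X : SObj V) (p : pred (fidx T (sobj X))) : SObj V :=
  {| sobj := {| fidx := {i : fidx T (sobj X) | p i};
                fcomp := fun i => fcomp T (sobj X) (val i) |};
     smap := fun i => smap X (val i) |}.
Arguments restrict {V} X p.

Lemma split_iso {V} {X : SObj V} (p : pred (fidx T (sobj X))) :
  s_iso T _ X (scoprod T V (restrict X p) (restrict X (fun i => ~~ p i))).
Proof.
pose f : FHom (sobj X) (sobj (scoprod T V (restrict X p) (restrict X (fun i => ~~ p i)))) :=
  fun i => match bdec (p i) with
           | left e => existT _ (inl (exist _ i e)) (idm _)
           | right e => existT _ (inr (exist _ i e)) (idm _) end.
pose g : FHom (sobj (scoprod T V (restrict X p) (restrict X (fun i => ~~ p i)))) (sobj X) :=
  fun k => match k with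
           | inl r => existT (fun j => Hom _ (fcomp T (sobj X) j)) (val r) (idm _)
           | inr r => existT (fun j => Hom _ (fcomp T (sobj X) j)) (val r) (idm _) end.
exists f, g; split; [|split; [|split]].
- by move=> i; rewrite /f; case: (bdec (p i)) => e /=; rewrite comp_idr.
- by case=> r /=; rewrite comp_idr.
- by move=> i; rewrite /fcompose /f /fid; case: (bdec (p i)) => e /=; rewrite comp_idl.
- case=> [[i e]|[i e]]; rewrite /fcompose /g /fid /f /=; case: (bdec (p i)) => e' /=.
  + by rewrite comp_idl (bool_irrelevance e e').
  + by have := e'; rewrite e.
  + by have := e; rewrite e'.
  + by rewrite comp_idl (bool_irrelevance e e').
Qed.


Lemma I0F (z : 'I_0) : False. Proof. by case: z. Qed.

Lemma cast_smap V (S : SObj V) x y (e : x = y) :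
  cmp (smap S y) (castF (fcomp T (sobj S)) e) = smap S x.
Proof. by case: y / e; rewrite /= comp_idr. Qed.

Lemma cast_sig (I : Type) (F : I -> Ob T) x y (e : y = x) :
  existT (fun j => Hom (F x) (F j)) y (castF F (esym e)) = existT _ x (idm _).
Proof. by case: x / e. Qed.

Lemma not_star V (X : SObj V) (i j : fidx T (sobj X)) : i != j -> ~ s_iso T _ X (starV T V).
Proof.
move=> /eqP nij [f [g [_ [_ [h _]]]]]; apply: nij.
have /(f_equal (@projT1 _ _)) /= hi := h i.
have /(f_equal (@projT1 _ _)) /= hj := h j.
by rewrite -hi -hj; case: (projT1 (f i)); case: (projT1 (f j)).
Qed.

Definition Wof V (S : SObj V) (k : 'I_#|{: fidx T (sobj S)}|) : {X : Ob T & Hom X V} :=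
  existT _ (fcomp T (sobj S) (enum_val k)) (smap S (enum_val k)).
Arguments Wof {V} S k.

Lemma sparse_of V (S : SObj V) :
  (forall x y, x != y -> ~ exists h, cmp (smap S y) h = smap S x) -> sparse S.
Proof.
move=> H; exists false, #|{: fidx T (sobj S)}|, (Wof S); split.
  move=> i j nij; apply: H; by rewrite (inj_eq enum_val_inj).
pose sm := sparse_model T V false _ (Wof S).
pose f : FHom (sobj S) (sobj sm) := fun x =>
  existT (fun j => Hom _ (fcomp T (sobj sm) j)) (inr (enum_rank x))
     (castF (fcomp T (sobj S)) (esym (enum_rankK x))).
pose g : FHom (sobj sm) (sobj S) := fun k =>
  match k with
  | inl z => False_rect _ (I0F z)
  | inr k => existT (fun j => Hom _ (fcomp T (sobj S) j)) (enum_val k) (idm _) end.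
exists f, g; split; [|split; [|split]].
- by move=> x; rewrite /f /=; apply: cast_smap.
- by case=> [z|k]; [case: (I0F z)| rewrite /= comp_idr].
- by move=> x; rewrite /fcompose /f /g /fid /= comp_idl cast_sig.
- case=> [z|k]; first by case: (I0F z).
  rewrite /fcompose /f /g /fid /= comp_idr.
  move: (esym (enum_rankK (enum_val k))); rewrite enum_valK => e.
  by rewrite castF_irr.
Qed.


Lemma sig_cast_ext (I : eqType) (F : I -> Ob T) (X : Ob T) (a j : I) (x : Hom X (F j)) y
  (E : j = a) : existT (fun j => Hom X (F j)) j x = existT _ a y -> cmp (castF F E) x = y.
Proof. by case: a / E y => y /pair2 ->; rewrite /= comp_idl. Qed.
Arguments sig_cast_ext {I F X a j x y} E _.

Lemma pair_unit (A : Type) (u : unit) (x y : A) :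
  existT (fun _ : unit => A) u x = existT (fun _ => A) tt y -> x = y.
Proof. by case: u => /pair2. Qed.
Arguments pair_unit {A u x y}.

Lemma sec_inv U W (f : Hom U W) s : cmp f s = idm W -> is_iso f -> cmp s f = idm U.
Proof.
move=> hs [g [h1 h2]].
have -> : s = g by rewrite -[s]comp_idl -h1 -comp_assoc hs comp_idr.
exact: h1.
Qed.
Arguments sec_inv {U W f s}.

Lemma or_other (I : eqType) (i i1 i2 : I) : (i == i1) || (i == i2) -> i <> i1 -> i = i2.
Proof. by case/orP => /eqP. Qed.
Arguments or_other {I i i1 i2}.

Variable hat : atomic T.
Variable hor : orbital T.
Variable C : collection T.
Variable hC : weak_indexing_system C.
Variable hu : almost_essentially_unital C.

Lemma C_iso {V} {S S' : SObj V} : C V S -> s_iso T _ S S' -> C V S'.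
Proof. exact: hC.1.1. Qed.

Lemma C_restrict V (X : SObj V) (p : pred (fidx T (sobj X))) i j :
  C V X -> p i -> p j -> i != j -> C V (restrict X p).
Proof.
move=> CX pi pj nij.
have CY := C_iso CX (split_iso p).
apply: (fun ns => (hu _ _ _ CY ns).1).
apply: (@not_star _ _ (inl (exist _ i pi) : fidx T (sobj (scoprod T V (restrict X p) (restrict X (fun i => ~~ p i))))) (inl (exist _ j pj))).
by apply/eqP; case=> E; rewrite E eqxx in nij.
Qed.

Lemma C_star V (S : SObj V) x : C V S -> C _ (starV T (fcomp T (sobj S) x)).
Proof.
move=> CS.
have [P [p1 [p2 pb]]] := hor _ _ _ (toPt T V S) (ptHom T _ _ (smap S x)).
have CP := hC.1.2 _ _ (smap S x) S P p1 p2 pb CS.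
apply: hC.2.1; by eexists; exact: CP.
Qed.


Definition pairM V (S : SObj V) (a b : fidx T (sobj S))
  (h : Hom (fcomp T (sobj S) a) (fcomp T (sobj S) b)) : SObj (fcomp T (sobj S) b) :=
  sparse_model T _ true 1 (fun _ => existT _ (fcomp T (sobj S) a) h).
Arguments pairM {V S a b} h.

Lemma C_pair V (S : SObj V) (CS : C V S) a b h :
  a != b -> cmp (smap S b) h = smap S a -> C _ (pairM h).
Proof.
move=> nab hab.
set F := fcomp T (sobj S).
have [P [p1 [p2 pb]]] := hor _ _ _ (toPt T V S) (ptHom T _ _ (smap S b)).
have CP := hC.1.2 _ _ (smap S b) S P p1 p2 pb CS.
set PP := {| sobj := P; smap := _ |} in CP.
case: pb => comm univ.
have [u1 [u1a [u1b _]]] := univ (pt T (F b))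
   (fun _ => existT (fun j => Hom _ (F j)) b (idm _))
   (fun _ => existT (fun j => Hom (F b) (fcomp T (pt T (F b)) j)) tt (idm _)) (fun _ => erefl).
case: (univ (pt T (F a))
   (fun _ => existT (fun j => Hom _ (F j)) a (idm _))
   (fun _ => existT (fun j => Hom (F a) (fcomp T (pt T (F b)) j)) tt h)) => [|u2 [u2a [u2b _]]].
  move=> [] /=; rewrite /fcompose /=.
  by rewrite hab comp_idr.
move: (u1a tt) (u1b tt); rewrite /fcompose /=; case: (u1 tt) => i1 e1 /= H1a H1b.
move: (u2a tt) (u2b tt); rewrite /fcompose /=; case: (u2 tt) => i2 e2 /= H2a H2b.
have H1b' := pair_unit H1b. clear H1b. rename H1b' into H1b.
have H2b' := pair_unit H2b. clear H2b. rename H2b' into H2b.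
have E1 := f_equal (@projT1 _ _) H1a; simpl in E1.
have E2 := f_equal (@projT1 _ _) H2a; simpl in E2.
have H2c := sig_cast_ext E2 H2a.
set f2 := cmp (castF F E2) (projT2 (p1 i2)).
have inv1 : cmp e1 (projT2 (p2 i1)) = idm _.
  apply: (sec_inv H1b); apply: hat; by exists e1.
have H2d : cmp f2 e2 = idm _ by rewrite /f2 -comp_assoc.
have inv2 : cmp e2 f2 = idm _.
  apply: (sec_inv H2d); apply: hat; by exists e2.
have hf2 : cmp h f2 = projT2 (p2 i2) by rewrite -H2b -comp_assoc inv2 comp_idr.
have n12 : i1 != i2.
  by apply/eqP => E; move: nab; rewrite -E1 -E2 E eqxx.
pose p := fun i => (i == i1) || (i == i2).
have pf1 : p i1 by rewrite /p eqxx.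
have pf2 : p i2 by rewrite /p eqxx orbT.
have CR := @C_restrict _ PP p i1 i2 CP pf1 pf2 n12.
apply: (C_iso CR).
pose M := pairM h.
pose R := restrict PP p.
pose Eof (r : fidx T (sobj R)) (ne : val r <> i1) : projT1 (p1 (val r)) = a :=
  eq_trans (f_equal (fun i => projT1 (p1 i)) (or_other (valP r) ne)) E2.
pose f : FHom (sobj R) (sobj M) := fun r =>
  match eq_comparable (val r) i1 with
  | left _ => existT (fun k => Hom (fcomp T P (val r)) (fcomp T (sobj M) k)) (inl ord0) (projT2 (p2 (val r)))
  | right ne => existT (fun k => Hom (fcomp T P (val r)) (fcomp T (sobj M) k)) (inr ord0)
                  (cmp (castF F (Eof r ne)) (projT2 (p1 (val r)))) end.
pose g : FHom (sobj M) (sobj R) := fun k =>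
  match k with
  | inl _ => existT (fun r => Hom (F b) (fcomp T (sobj R) r)) (exist _ i1 pf1) e1
  | inr _ => existT (fun r => Hom (F a) (fcomp T (sobj R) r)) (exist _ i2 pf2) e2 end.
have cE : forall E : projT1 (p1 i2) = a, castF F E = castF F E2.
  by move=> E; rewrite (eq_irrelevance E E2).
exists f, g; split; [|split; [|split]].
- case=> i pi; rewrite /f /=; case: (eq_comparable i i1) => [e|ne] /=.
    by rewrite comp_idl.
  have ei := or_other pi ne; subst i.
  by rewrite cE.
- by case=> k /=.
- case=> i pi; rewrite /fcompose /f /g /fid /=; case: (eq_comparable i i1) => [e|ne] /=.
    by subst i; rewrite inv1 (bool_irrelevance pf1 pi).
  have ei := or_other pi ne; subst i.
  by rewrite cE inv2 (bool_irrelevance pf2 pi).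
- case=> k; rewrite /fcompose /f /g /fid /=; rewrite (ord1 k).
    case: (eq_comparable i1 i1) => [e|ne] //= ; by rewrite H1b.
  case: (eq_comparable i2 i1) => [e|ne] /=; first by rewrite e eqxx in n12.
  by rewrite cE H2d.
Qed.


Lemma ord_true (c : bool) (k : 'I_(nat_of_bool c)) : c.
Proof. by case: c k => // [[]]. Qed.
Arguments ord_true {c} k.

Lemma ord_le1 (c : bool) (i j : 'I_(nat_of_bool c)) : i = j.
Proof.
apply: val_inj; case: c i j => [] [i hi] [j hj] //=.
by move: hi hj; rewrite !ltnS !leqn0 => /eqP -> /eqP ->.
Qed.
Arguments ord_le1 {c} i j.

Lemma neq_of (I : eqType) (x a : I) : x <> a -> x != a.
Proof. by move/eqP. Qed.
Arguments neq_of {I x a}.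

Lemma cast_sig2 (I : Type) (F : I -> Ob T) x y (e : x = y) :
  existT (fun j => Hom (F x) (F j)) y (castF F e) = existT _ x (idm _).
Proof. by case: y / e. Qed.

Definition mkT V (S : SObj V) (a b x : fidx T (sobj S))
  (h : Hom (fcomp T (sobj S) a) (fcomp T (sobj S) b)) (c : bool) (pf : c -> x = b)
  : SObj (fcomp T (sobj S) x) :=
  sparse_model T _ true c
    (fun k => existT _ (fcomp T (sobj S) a) (cmp (castF (fcomp T (sobj S)) (esym (pf (ord_true k)))) h)).
Arguments mkT {V S a b} x h c pf.

Lemma sparse_mkT V (S : SObj V) a b x h c pf : sparse (@mkT V S a b x h c pf).
Proof.
eexists true, c, _; split; last exact: s_iso_refl.
by move=> i j; rewrite (ord_le1 i j) eqxx.
Qed.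

Lemma star_iso0 U (W : 'I_0 -> {X : Ob T & Hom X U}) :
  s_iso T _ (starV T U) (sparse_model T U true 0 W).
Proof.
pose f : FHom (sobj (starV T U)) (sobj (sparse_model T U true 0 W)) := fun _ =>
  existT (fun j => Hom U (fcomp T (sobj (sparse_model T U true 0 W)) j)) (inl ord0) (idm U).
pose g : FHom (sobj (sparse_model T U true 0 W)) (sobj (starV T U)) := fun k =>
  match k with
  | inl _ => existT (fun j => Hom U (fcomp T (sobj (starV T U)) j)) tt (idm U)
  | inr z => False_rect _ (I0F z) end.
exists f, g; split; [|split; [|split]].
- by move=> []; rewrite /= comp_idl.
- by case=> [z|z]; [rewrite /= comp_idl | case: (I0F z)].
- by move=> []; rewrite /fcompose /= comp_idl.
- case=> [z|z]; last by case: (I0F z).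
  by rewrite /fcompose /fid /= comp_idl (ord_le1 z ord0).
Qed.

Lemma C_mkT V (S : SObj V) (CS : C V S) a b h x c pf :
  a != b -> cmp (smap S b) h = smap S a -> C _ (@mkT V S a b x h c pf).
Proof.
move=> nab hab; case: c pf => pf.
  have e := pf isT.
  have -> : @mkT V S a b x h true pf = @mkT V S a b x h true (fun _ => e).
    rewrite /mkT; congr (sparse_model _ _ _ _ _); apply: functional_extensionality => k.
    by rewrite (eq_irrelevance (pf (ord_true k)) e).
  subst x; rewrite /mkT /= comp_idl.

  exact: (@C_pair _ _ CS _ _ _ nab hab).
have H1 := @C_star _ _ x CS. rewrite /mkT. exact: (C_iso H1 (star_iso0 _ _)).
Qed.


Lemma lt0_eqxx (I : eqType) (x : I) : 0 < nat_of_bool (x == x).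
Proof. by rewrite eqxx. Qed.
Arguments lt0_eqxx {I} x.

Definition TfOf V (S : SObj V) (a b : fidx T (sobj S))
  (h : Hom (fcomp T (sobj S) a) (fcomp T (sobj S) b))
  (i : fidx T (sobj (restrict S (fun x => x != a)))) :
  SObj (fcomp T (sobj (restrict S (fun x => x != a))) i) :=
  mkT (val i) h (val i == b) (fun H : val i == b => elimT eqP H).
Arguments TfOf {V S a b} h i.

Lemma decomp {V} {S : SObj V} {a b} {h} :
  a != b -> cmp (smap S b) h = smap S a ->
  s_iso T _ S (orbit_coprod T V (restrict S (fun x => x != a)) (TfOf h)).
Proof.
move=> nab hab.
set S' := restrict S (fun x => x != a).
set O := orbit_coprod T V S' (TfOf h).
have nba : b != a by rewrite eq_sym.
pose bS' : fidx T (sobj S') := exist _ b nba.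
pose kb : fidx T (sobj (TfOf h bS')) := inr (@Ordinal (nat_of_bool (b == b)) 0 (lt0_eqxx b)).
pose f : FHom (sobj S) (sobj O) := fun x =>
  match eq_comparable x a with
  | left e => existT (fun p => Hom (fcomp T (sobj S) x) (fcomp T (sobj O) p))
                (existT _ bS' kb) (castF (fcomp T (sobj S)) e)
  | right ne => existT (fun p => Hom (fcomp T (sobj S) x) (fcomp T (sobj O) p))
                (existT (fun i => fidx T (sobj (TfOf h i))) (exist _ x (neq_of ne)) (inl ord0)) (idm _) end.
pose g : FHom (sobj O) (sobj S) := fun p =>
  let (i, t) as p0 return {j : fidx T (sobj S) & Hom (fcomp T (sobj O) p0) (fcomp T (sobj S) j)} := p in
  match t as t0 return {j : fidx T (sobj S) & Hom (fcomp T (sobj (TfOf h i)) t0) (fcomp T (sobj S) j)} with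
  | inl _ => existT _ (val i) (idm _)
  | inr _ => existT _ a (idm _) end.
have castE : forall x (E : b = x), cmp (smap S x) (cmp (castF (fcomp T (sobj S)) E) h) = smap S a.
  by move=> x E; case: x / E; rewrite /= comp_idl.
exists f, g; split; [|split; [|split]].
- move=> x; rewrite /f; case: (eq_comparable x a) => [e|ne] /=.
    by rewrite castF_irr comp_idl hab cast_smap.
  by rewrite !comp_idr.
- case=> [[x px] [u|k]] /=; first by rewrite !comp_idr.
  by rewrite comp_idr castE.
- move=> x; rewrite /fcompose /f /g /fid; case: (eq_comparable x a) => [e|ne] /=.
    by rewrite comp_idl cast_sig2.
  by rewrite comp_idl.
- case=> [[x px] [u|k]]; rewrite /fcompose /f /g /fid /=.
    case: (eq_comparable x a) => [e|ne] /=; first by exfalso; exact: (elimN eqP px e).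
    by rewrite comp_idl (bool_irrelevance (neq_of ne) px) (ord_le1 u ord0).
  case: (eq_comparable a a) => [e|ne] /=; last by case: ne.
  rewrite castF_irr comp_idl.
  have ex : x = b by apply/eqP; exact: (ord_true k).
  subst x.
  by rewrite /bS' /kb (bool_irrelevance px nba) (ord_le1 k (Ordinal (lt0_eqxx b))).
Qed.


Lemma C_restrict' V (X : SObj V) (p : pred (fidx T (sobj X))) i j :
  C V X -> p i -> ~~ p j -> C V (restrict X p).
Proof.
move=> CX pi pj.
have CY := C_iso CX (split_iso p).
apply: (fun ns => (hu _ _ _ CY ns).1).
exact: (@not_star _ _ (inl (exist _ i pi) : fidx T (sobj (scoprod T V (restrict X p) (restrict X (fun i => ~~ p i))))) (inr (exist _ j pj))).
Qed.

Local Notation D := (Cl_infty (sparse_part C)).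

Lemma D_iso {V} {S S' : SObj V} : D V S -> s_iso T _ S S' -> D V S'.
Proof. move=> H i E hE hs; exact: hE.1.1 _ _ _ (H E hE hs) i. Qed.

Lemma D_comp {V} {S : SObj V} {Tf} : D V S -> (forall i, D _ (Tf i)) -> D V (orbit_coprod T V S Tf).
Proof. move=> H HT E hE hs; apply: hE.2.2 => [|i]; [exact: H | exact: HT]. Qed.

Lemma D_sp {V} {S : SObj V} : C V S -> sparse S -> D V S.
Proof. move=> c s E hE hs; exact: hs. Qed.

Lemma step V (S : SObj V) :
  (forall V' (S' : SObj V'), #|{: fidx T (sobj S')}| < #|{: fidx T (sobj S)}| -> C V' S' -> D V' S') ->
  C V S -> D V S.
Proof.
move=> IH CS.
case: (classic (exists a b, a != b /\ exists h, cmp (smap S b) h = smap S a)); last first.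
  move=> nE; apply: D_sp CS _; apply: sparse_of => x y nxy [h hh].
  by apply: nE; exists x, y; split => //; exists h.
case=> a [b [nab [h hab]]].
apply: D_iso (s_iso_sym (decomp nab hab)).
apply: D_comp => [|i].
  apply: IH; last by apply: (@C_restrict' _ S _ b a CS) => //; rewrite ?eqxx // eq_sym.
  rewrite card_sig cardC1 prednK //.
  by apply/card_gt0P; exists a.
apply: D_sp; last by rewrite /TfOf; exact (@sparse_mkT V S a b (val i) h _ _).
rewrite /TfOf.
exact (@C_mkT V S CS a b h (val i) _ _ nab hab).
Qed.

Lemma main_ind n : forall V (S : SObj V), #|{: fidx T (sobj S)}| <= n -> C V S -> D V S.
Proof.
elim: n => [|n IHn] V S hn CS; apply: (@step V S _ CS) => V' S' hlt.
  by move: (leq_trans hlt hn).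
apply: IHn; by rewrite -ltnS (leq_trans hlt hn).
Qed.

End Main.

Theorem mainTheorem20 (T : Cat) (hat : atomic T) (hor : orbital T)
  (C : collection T) (hC : weak_indexing_system C)
  (hu : almost_essentially_unital C) :
  forall (V : Ob T) (S : SObj V), C V S <-> Cl_infty (sparse_part C) V S.
Proof.
move=> V S; split.
  exact: (@main_ind T hat hor C hC hu _ V S (leqnn _)).
move=> H; apply: (H C hC); by move=> V' S' [].
Qed.
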